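(* Let $\kappa$ be a cardinal and let $\{X_\alpha\}_{\alpha\in\mathbb I}$ be a $\kappa$-long directed family of topological spaces, with union $X=\bigcup_{\alpha}X_\alpha$. For an admissible topology $\mathscr S$ on $X$, the following are equivalent: (i) $t(X,\mathscr S)\leq\kappa$; (ii) $\mathscr S=\mathscr T$, where $\mathscr T$ is the colimit space topology, and $t(X_\alpha,\mathscr S)\leq\kappa$ for all $\alpha\in\mathbb I$.
   Context: A directed family of spaces $\{X_\alpha\}_{\alpha\in\mathbb I}$ here consists of spaces with $X_\alpha\subseteq X_\beta$ for $\alpha\leq\beta$, the bonding maps being the inclusions (continuous). It is $\kappa$-long if every subset $C\subseteq\mathbb I$ with $|C|\leq\kappa$ has an upper bound in $\mathbb I$. The colimit space topology on $X$ is $\mathscr T=\{U\subseteq X\mid U\cap X_\alpha\text{ open in }X_\alpha\ \forall\alpha\}$. A topology $\mathscr S$ on $X$ is admissible if every inclusion $X_\alpha\to(X,\mathscr S)$ is a topological embedding. The tightness $t(Y)$ of a space $Y$ is the least cardinal $\lambda$ such that whenever $p\in\operatorname{cl}A$ for $A\subseteq Y$, there is $C\subseteq A$ with $|C|\leq\lambda$ and $p\in\operatorname{cl}C$. $t(X_\alpha,\mathscr S)$ denotes the tightness of $X_\alpha$ with the subspace topology from $\mathscr S$. *)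

(* Defs.v *)
From mathcomp Require Import all_boot.
From mathcomp Require Import boolp classical_sets cardinality.
Set Implicit Arguments. Unset Strict Implicit. Unset Printing Implicit Defensive.
Local Open Scope classical_set_scope.

Definition is_topology {T : Type} (Y : set T) (O : set (set T)) : Prop :=
  [/\ (forall U, O U -> U `<=` Y), O set0, O Y,
      (forall U V, O U -> O V -> O (U `&` V)) &
      (forall F : set (set T), F `<=` O -> O (\bigcup_(U in F) U))].

Definition subspace_top {T : Type} (S : set (set T)) (Y : set T) : set (set T) :=
  [set U | exists V, S V /\ U = V `&` Y].

Definition in_closure {T : Type} (O : set (set T)) (A : set T) (p : T) : Prop :=
  forall U, O U -> U p -> U `&` A !=set0.

(* tightness of the space (Y, O) is at most the cardinal |K| *)
Definition tightness_le {T : Type} (Y : set T) (O : set (set T)) (K : Type) : Prop :=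
  forall (A : set T) (p : T), A `<=` Y -> Y p -> in_closure O A p ->
    exists C : set T, [/\ C `<=` A, (C #<= [set: K])%card & in_closure O C p].

Definition colimit_top {I T : Type} (Xa : I -> set T) (tau : I -> set (set T))
  : set (set T) :=
  [set U | forall a, tau a (U `&` Xa a)].

Definition admissible {I T : Type} (Xa : I -> set T) (tau : I -> set (set T))
  (S : set (set T)) : Prop :=
  forall a, subspace_top S (Xa a) = tau a.

Definition kappa_long {I : Type} (le : I -> I -> Prop) (K : Type) : Prop :=
  forall C : set I, (C #<= [set: K])%card -> exists b, forall a, C a -> le a b.

(* directed family of spaces X_a (open sets tau a), bonding maps = inclusions
   (continuous), with union the whole type T *)
Definition directed_family {I T : Type} (le : I -> I -> Prop)
  (Xa : I -> set T) (tau : I -> set (set T)) : Prop :=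
  (forall a, le a a) /\ (forall a b c, le a b -> le b c -> le a c) /\
  (exists a : I, True) /\ (forall a b, exists c, le a c /\ le b c) /\
  (forall a, is_topology (Xa a) (tau a)) /\
  (forall a b, le a b -> Xa a `<=` Xa b) /\
  (forall a b U, le a b -> tau b U -> tau a (U `&` Xa a)) /\
  \bigcup_a Xa a = [set: T].

(* Main.v *)
Require Import Defs.
From mathcomp Require Import all_boot.
From mathcomp Require Import boolp classical_sets cardinality.
Local Open Scope classical_set_scope.

Lemma byc (Q : Prop) : (~ Q -> False) -> Q.
Proof. by move=> h; apply: contra_notP h; apply. Qed.

Lemma L1 {T : Type} {Y W : set T} {O : set (set T)} :
  is_topology Y O ->
  (forall q, W q -> exists U, O U /\ U q /\ U `<=` W) -> O W.
Proof.
move=> [_ _ _ _ hU] hW.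
have -> : W = \bigcup_(U in [set U | O U /\ U `<=` W]) U.
  apply/seteqP; split => x.
  - move=> Wx; have [U [OU [Ux UW]]] := hW x Wx; by exists U.
  - by move=> [U [_ UW] Ux]; apply: UW.
by apply: hU => U [].
Qed.

Lemma L2 {T : Type} {Y W : set T} {O : set (set T)} {q : T} :
  is_topology Y O ->
  ~ (exists U, O U /\ U q /\ U `<=` W) -> in_closure O (Y `\` W) q.
Proof.
move=> [hY _ _ _ _] hn U OU Uq.
apply: contra_notP hn => hne; exists U; split => //; split => // x Ux.
apply: contra_notP hne => nW; exists x; split => //; split => //.
exact: (hY U OU).
Qed.

Lemma L3 {T : Type} {S : set (set T)} {Y A : set T} {p : T} :
  in_closure S A p -> A `<=` Y -> in_closure (subspace_top S Y) A p.
Proof.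
move=> hc AY U [V [SV ->]] [Vp Yp].
have [x [Vx Ax]] := hc V SV Vp.
exists x; split => //; split => //; exact: AY.
Qed.

Lemma L4 {T : Type} {S : set (set T)} {Y A : set T} {p : T} :
  Y p -> in_closure (subspace_top S Y) A p -> in_closure S A p.
Proof.
move=> Yp hc U SU Up.
have [x [[Ux _] Ax]] := hc (U `&` Y) (ex_intro _ U (conj SU erefl)) (conj Up Yp).
by exists x.
Qed.

Theorem proposition2p3 (K : Type) (I : Type) (le : I -> I -> Prop)
  (X : Type) (Xa : I -> set X) (tau : I -> set (set X)) (S : set (set X)) :
  directed_family le Xa tau -> kappa_long le K ->
  is_topology [set: X] S -> admissible Xa tau S ->
  (tightness_le [set: X] S K <->
   (S = colimit_top Xa tau /\
    forall a, tightness_le (Xa a) (subspace_top S (Xa a)) K)).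
Proof.
move=> [lerefl [letrans [_ [ledir [htop [hmono [_ hcov]]]]]]] hlong hS adm.
have hf : {f : X -> I & forall x, Xa (f x) x}.
  apply: (@boolp.choice _ _ (fun x a => Xa a x)) => x.
  have : [set: X] x by [].
  by rewrite -hcov => -[a _ ?]; exists a.
have [f hfx] := hf.
have STS : S setT by case: hS.
split.
- move=> ht; split.
  + apply: funext => U; apply: propext; split.
    * by move=> SU a; rewrite -adm; exists U.
    * move=> hU; apply: (L1 hS) => q Uq.
      apply: byc => hn.
      have hcl := L2 hS hn.
      have [C [CsU CK Ccl]] := ht _ q (fun _ _ => Logic.I) Logic.I hcl.
      have [b hb] := hlong (f @` C) (card_le_trans (card_image_le f C) CK).
      have [c [bc qc]] := ledir b (f q).
      have := hU c; rewrite -adm => -[V [SV hV]].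
      have Vq : V q.
        have : (U `&` Xa c) q by split => //; apply: (hmono (f q)).
        by rewrite hV => -[].
      have [x [Vx Cx]] := Ccl V SV Vq.
      have Xcx : Xa c x.
        apply: (hmono b) => //; apply: (hmono (f x)) => //.
        by apply: hb; exists x.
      have : (U `&` Xa c) x by rewrite hV.
      by move=> [Ux _]; have [_ nU] := CsU x Cx; apply: nU.
  + move=> a A p AX Xp hcl.
    have hclS := L4 Xp hcl.
    have [C [CA CK Ccl]] := ht A p (fun _ _ => Logic.I) Logic.I hclS.
    exists C; split => //.
    apply: L3 => // x Cx; exact/AX/CA.
- move=> [hST ht] A p _ _ hcl.
  have [k _] : exists k : K, True.
    have : [set: X] p by [].
    rewrite -hcov => -[a0 _ Xp].
    have hc0 : in_closure (subspace_top S (Xa a0)) (Xa a0) p.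
      apply: L3 => //; move=> U SU Up; by exists p.
    have [C [CX CK Ccl]] := ht a0 _ p (fun x h => h) Xp hc0.
    have [x [_ Cx]] := L4 Xp Ccl _ STS Logic.I.
    apply: byc => hn.
    have hK : [set: K] = set0.
      apply/seteqP; split => // y _; apply: hn; by exists y.
    move: CK; rewrite hK => /card_le0P C0.
    by rewrite C0 in Cx.
  pose B := [set q | exists C, [/\ C `<=` A, (C #<= [set: K])%card & in_closure S C q]].
  apply: byc => nBp.
  have hg : {g : X -> set X & forall d, B d ->
      [/\ g d `<=` A, (g d #<= [set: K])%card & in_closure S (g d) d]}.
    apply: (@boolp.choice _ _ (fun d C => B d -> [/\ C `<=` A, (C #<= [set: K])%card & in_closure S C d])) => d.
    case: (pselect (B d)) => [[C hC]|nB]; first by exists C.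
    by exists set0.
  have [g hgd] := hg.
  have hh : {h : X -> I & forall d, B d -> forall i, (f @` g d) i -> le i (h d)}.
    apply: (@boolp.choice _ _ (fun d b => B d -> forall i, (f @` g d) i -> le i b)) => d.
    case: (pselect (B d)) => [Bd|nB]; last by exists (f d).
    have [_ gK _] := hgd d Bd.
    have [b hb] := hlong (f @` g d) (card_le_trans (card_image_le f _) gK).
    by exists b.
  have [h hhd] := hh.
  have SnB : S (~` B).
    rewrite hST => a.
    apply: (L1 (htop a)) => q [nBq Xq].
    apply: byc => hn.
    have hcl2 := L2 (htop a) hn.
    rewrite -adm in hcl2.
    have [D [DW DK Dcl]] := ht a _ q (fun x h => proj1 h) Xq hcl2.
    have DB : forall d, D d -> B d.
      move=> d Dd; have [Xd nW] := DW d Dd.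
      by apply: byc => nB; apply: nW.
    have [gam hgam] := hlong (h @` D) (card_le_trans (card_image_le h D) DK).
    have [del [gd ad]] := ledir gam a.
    pose A' := \bigcup_(d in D) g d.
    have A'A : A' `<=` A.
      by move=> x [d Dd gx]; have [gA _ _] := hgd d (DB d Dd); apply: gA.
    have A'X : A' `<=` Xa del.
      move=> x [d Dd gx].
      apply: (hmono gam) => //; apply: (hmono (h d)); first by apply: hgam; exists d.
      apply: (hmono (f x)) => //.
      by apply: (hhd d (DB d Dd)); exists x.
    have Xdq : Xa del q by apply: (hmono a).
    have clA' : in_closure S A' q.
      move=> U SU Uq.
      have [d [Ud Dd]] := L4 Xq Dcl _ SU Uq.
      have [_ _ gcl] := hgd d (DB d Dd).
      have [x [Ux gx]] := gcl U SU Ud.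
      by exists x; split => //; exists d.
    have [C [CA' CK Ccl]] := ht del A' q A'X Xdq (L3 clA' A'X).
    apply: nBq; exists C; split => //.
    + by move=> x Cx; apply/A'A/CA'.
    + exact: L4 Ccl.
  have [x [nBx Ax]] := hcl _ SnB nBp.
  apply: nBx; exists [set x]; split.
  + by move=> y ->.
  + apply: (card_le_trans (B := [set k])).
      by move: (eq_card1 x k) => /card_eqPle [].
    exact: subset_card_le.
  + by move=> U SU Ux; exists x.
Qed.
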